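(* Consider the four-oscillator system below with $\alpha_\mathrm{s}=\alpha_\mathrm{n}=\frac{\pi}{2}$ or $\alpha_\mathrm{s}=\alpha_\mathrm{n}=-\frac{\pi}{2}$, and arbitrary $A\in\mathbb{R}$, $\omega\in\mathbb{R}$. Then $$H(\psi_1,\psi_3)=\sin\!\left(\frac{\psi_1}{2}\right)\sin\!\left(\frac{\psi_3}{2}\right)$$ (with $\psi_1,\psi_3$ the real-valued phase differences of a solution) is constant along every solution.
   Context: Network of $M=2$ populations of $N=2$ phase oscillators with phases $\theta_{\sigma,k}(t)\in\mathbb{R}$ (population $\sigma\in\{1,2\}$, oscillator $k\in\{1,2\}$), evolving by $$\dot\theta_{\sigma,k}=\omega+\frac{K_\mathrm{s}}{4}\sum_{j=1}^{2}\sin(\theta_{\sigma,j}-\theta_{\sigma,k}-\alpha_\mathrm{s})+\frac{K_\mathrm{n}}{4}\sum_{j=1}^{2}\sin(\theta_{\tau,j}-\theta_{\sigma,k}-\alpha_\mathrm{n}),$$ where $\tau$ denotes the population other than $\sigma$, $\omega\in\mathbb{R}$, $\alpha_\mathrm{s},\alpha_\mathrm{n}\in\mathbb{R}$ are phase lags, and the coupling strengths are parametrized by $A\in\mathbb{R}$ via $K_\mathrm{s}=(1+A)/2$, $K_\mathrm{n}=(1-A)/2$ (so $K_\mathrm{s}+K_\mathrm{n}=1$, $A=K_\mathrm{s}-K_\mathrm{n}$). The phase differences are $\psi_1=\theta_{1,1}-\theta_{1,2}$, $\psi_2=\theta_{1,2}-\theta_{2,1}$, $\psi_3=\theta_{2,1}-\theta_{2,2}$;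 they satisfy an autonomous ODE (the reduced system) since the right-hand side depends only on phase differences. *)

(* Defs.v *)
From Stdlib Require Import Reals.
From Coquelicot Require Import Coquelicot.
Open Scope R_scope.

(* Right-hand side for oscillator with phase [self]; [own1 own2] are the phases
   of its own population, [oth1 oth2] those of the other population. *)
Definition osc_rhs (om Ks Kn als aln : R) (own1 own2 oth1 oth2 self : R) : R :=
  om + Ks / 4 * (sin (own1 - self - als) + sin (own2 - self - als))
     + Kn / 4 * (sin (oth1 - self - aln) + sin (oth2 - self - aln)).

Definition K_s (A : R) : R := (1 + A) / 2.
Definition K_n (A : R) : R := (1 - A) / 2.

Definition is_solution (A om als aln : R) (a b : Rbar)
    (th11 th12 th21 th22 : R -> R) : Prop :=
  forall t : R, Rbar_lt a t -> Rbar_lt t b ->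
    let Ks := K_s A in let Kn := K_n A in
    is_derive th11 t (osc_rhs om Ks Kn als aln (th11 t) (th12 t) (th21 t) (th22 t) (th11 t)) /\
    is_derive th12 t (osc_rhs om Ks Kn als aln (th11 t) (th12 t) (th21 t) (th22 t) (th12 t)) /\
    is_derive th21 t (osc_rhs om Ks Kn als aln (th21 t) (th22 t) (th11 t) (th12 t) (th21 t)) /\
    is_derive th22 t (osc_rhs om Ks Kn als aln (th21 t) (th22 t) (th11 t) (th12 t) (th22 t)).

Definition H (psi1 psi3 : R) : R := sin (psi1 / 2) * sin (psi3 / 2).

(* Main.v *)
Require Import Defs.
From Stdlib Require Import Reals Lra.
From Coquelicot Require Import Coquelicot.
Open Scope R_scope.

Lemma cdiff (A B : R) : cos A - cos B = -2 * sin ((A - B)/2) * sin ((A+B)/2).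
Proof. rewrite form2; ring. Qed.
Lemma ssum (A B : R) : sin A + sin B = 2 * cos ((A - B)/2) * sin ((A+B)/2).
Proof. rewrite form3; ring. Qed.
Lemma piece (r p q : R) : cos (2*r - 2*p) - cos (2*r - 2*q) = 2 * sin (p - q) * sin (2*r - p - q).
Proof. rewrite cdiff. replace ((2*r - 2*p - (2*r - 2*q))/2) with (-(p-q)) by field.
  replace ((2 * r - 2 * p + (2 * r - 2 * q)) / 2) with (2*r-p-q) by field.
  rewrite sin_neg; ring. Qed.
Lemma trig (p q r s : R) :
  let x := 2*p in let y := 2*q in let u := 2*r in let v := 2*s in
  cos (p - q) * sin (r - s) *
   ((cos (u - x) + cos (v - x)) - (cos (u - y) + cos (v - y)))
  + sin (p - q) * cos (r - s) *
   ((cos (x - u) + cos (y - u)) - (cos (x - v) + cos (y - v))) = 0.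
Proof.
  intros x y u v; subst x y u v.
  replace ((cos (2*r - 2*p) + cos (2*s - 2*p)) - (cos (2*r - 2*q) + cos (2*s - 2*q)))
    with ((cos (2*r - 2*p) - cos (2*r - 2*q)) + (cos (2*s - 2*p) - cos (2*s - 2*q))) by ring.
  replace ((cos (2*p - 2*r) + cos (2*q - 2*r)) - (cos (2*p - 2*s) + cos (2*q - 2*s)))
    with ((cos (2*p - 2*r) - cos (2*p - 2*s)) + (cos (2*q - 2*r) - cos (2*q - 2*s))) by ring.
  rewrite !piece.
  replace (2 * sin (p - q) * sin (2 * r - p - q) + 2 * sin (p - q) * sin (2 * s - p - q))
    with (2 * sin (p - q) * (sin (2 * r - p - q) + sin (2 * s - p - q))) by ring.
  replace (2 * sin (r - s) * sin (2 * p - r - s) + 2 * sin (r - s) * sin (2 * q - r - s))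
    with (2 * sin (r - s) * (sin (2 * p - r - s) + sin (2 * q - r - s))) by ring.
  rewrite !ssum.
  replace ((2 * r - p - q - (2 * s - p - q)) / 2) with (r - s) by field.
  replace ((2 * r - p - q + (2 * s - p - q)) / 2) with (-(p + q - r - s)) by field.
  replace ((2 * p - r - s - (2 * q - r - s)) / 2) with (p - q) by field.
  replace ((2 * p - r - s + (2 * q - r - s)) / 2) with (p + q - r - s) by field.
  rewrite sin_neg. ring.
Qed.

Lemma trig2 (x y u v : R) :
  cos ((x - y)/2) * sin ((u - v)/2) *
   ((cos (u - x) + cos (v - x)) - (cos (u - y) + cos (v - y)))
  + sin ((x - y)/2) * cos ((u - v)/2) *
   ((cos (x - u) + cos (y - u)) - (cos (x - v) + cos (y - v))) = 0.
Proof.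
  pose proof (trig (x/2) (y/2) (u/2) (v/2)) as T. simpl in T.
  replace (2 * (x/2)) with x in T by field.
  replace (2 * (y/2)) with y in T by field.
  replace (2 * (u/2)) with u in T by field.
  replace (2 * (v/2)) with v in T by field.
  replace ((x - y)/2) with (x/2 - y/2) by field.
  replace ((u - v)/2) with (u/2 - v/2) by field.
  exact T.
Qed.

Lemma shift (alpha : R) : (alpha = PI / 2 \/ alpha = - (PI / 2)) ->
  exists e, forall z, sin (z - alpha) = e * cos z.
Proof.
  intros [-> | ->].
  - exists (-1). intro z. rewrite sin_minus, sin_PI2, cos_PI2. ring.
  - exists 1. intro z. replace (z - - (PI/2)) with (z + PI/2) by ring.
    rewrite sin_plus, sin_PI2, cos_PI2. ring.
Qed.

Lemma half_sin (f : R -> R) t df : is_derive f t df ->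
  is_derive (fun t => sin (f t / 2)) t (cos (f t / 2) * (df / 2)).
Proof.
  intro Hf.
  assert (Hg : is_derive (fun t => f t / 2) t (df / 2)).
  { apply (is_derive_ext (fun t => scal (/2) (f t))).
    - intro; unfold scal; simpl; unfold mult; simpl; field.
    - replace (df / 2) with (scal (/2) df) by (unfold scal; simpl; unfold mult; simpl; field).
      apply is_derive_scal. exact Hf. }
  pose proof (is_derive_comp sin (fun t => f t / 2) t _ _ (is_derive_sin _) Hg) as X.
  unfold scal in X; simpl in X; unfold mult in X; simpl in X.
  replace (f t / 2) with (f t / 2) in X by field.
  replace (cos (f t / 2) * (df / 2)) with (df / 2 * cos (f t / 2)) by ring.
  exact X.
Qed.

Theorem mainTheorem4 (alpha A om : R) (a b : Rbar) (th11 th12 th21 th22 : R -> R) :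
  (alpha = PI / 2 \/ alpha = - (PI / 2)) ->
  is_solution A om alpha alpha a b th11 th12 th21 th22 ->
  forall t1 t2 : R, Rbar_lt a t1 -> Rbar_lt t1 b -> Rbar_lt a t2 -> Rbar_lt t2 b ->
    H (th11 t1 - th12 t1) (th21 t1 - th22 t1) =
    H (th11 t2 - th12 t2) (th21 t2 - th22 t2).
Proof.
  intros Hal Hsol t1 t2 Ha1 Hb1 Ha2 Hb2.
  destruct (shift alpha Hal) as [e He].
  set (g := fun t => H (th11 t - th12 t) (th21 t - th22 t)).
  assert (Hd : forall t : R, Rbar_lt a t -> Rbar_lt t b -> is_derive g t 0).
  { intros t Hat Htb.
    destruct (Hsol t Hat Htb) as [D11 [D12 [D21 D22]]].
    pose proof (half_sin _ _ _ (is_derive_minus _ _ _ _ _ D11 D12)) as P1.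
    pose proof (half_sin _ _ _ (is_derive_minus _ _ _ _ _ D21 D22)) as P3.
    pose proof (is_derive_mult _ _ _ _ _ P1 P3 ltac:(intros; apply Rmult_comm)) as P.
    unfold g, H.
    unfold minus, plus, opp, mult in P; simpl in P.
    match type of P with is_derive _ _ ?v => replace 0 with v end.
    { eapply is_derive_ext; [ | exact P ].
      intro s. simpl. f_equal; f_equal; f_equal; ring. }
    unfold osc_rhs. rewrite !He.
    set (x := th11 t); set (y := th12 t); set (u := th21 t); set (v := th22 t).
    replace (x + - y) with (x - y) by ring. replace (u + - v) with (u - v) by ring.
    replace (x - x) with 0 by ring. replace (y - y) with 0 by ring.
    replace (u - u) with 0 by ring. replace (v - v) with 0 by ring.
    rewrite cos_0.
    assert (c1 : cos (y - x) = cos (x - y)) by (replace (y - x) with (-(x - y)) by ring; apply cos_neg).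
    assert (c2 : cos (v - u) = cos (u - v)) by (replace (v - u) with (-(u - v)) by ring; apply cos_neg).
    rewrite c1, c2.
    pose proof (trig2 x y u v) as T.
    rewrite <- (Rmult_0_r (e * K_n A / 8)), <- T. field. }
  assert (In : forall x, Rmin t1 t2 <= x <= Rmax t1 t2 -> Rbar_lt a x /\ Rbar_lt x b).
  { intros x [h1 h2].
    destruct (Rle_dec t1 t2) as [l|l].
    - rewrite Rmin_left in h1 by exact l. rewrite Rmax_right in h2 by exact l.
      split; [apply (Rbar_lt_le_trans _ t1); auto | apply (Rbar_le_lt_trans _ t2); auto].
    - rewrite Rmin_right in h1 by lra. rewrite Rmax_left in h2 by lra.
      split; [apply (Rbar_lt_le_trans _ t2); auto | apply (Rbar_le_lt_trans _ t1); auto]. }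
  destruct (MVT_gen g t1 t2 (fun _ => 0)) as [c [_ Hc]].
  - intros x hx. destruct (In x) as [p q]; [lra|]. apply Hd; auto.
  - intros x hx. destruct (In x hx) as [p q].
    apply continuity_pt_filterlim. apply (ex_derive_continuous (K := R_AbsRing) (V := R_NormedModule) g x). exists 0. apply Hd; auto.
  - unfold g in Hc. lra.
Qed.
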